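(* Let $\mathcal{A}:\mathbb{R}^{n_1\times n_2}\to\mathbb{R}^m$ be linear, $y\in\mathbb{R}^m$, $R\ge1$, $\alpha,\beta>0$, and let $(u^1_{\alpha,\beta},\dots,u^R_{\alpha,\beta},v^1_{\alpha,\beta},\dots,v^R_{\alpha,\beta})$ be a global minimizer of $J^R_{\alpha,\beta}$. Let $\gamma>0$ and $r\in\{1,\dots,R\}$. If $v^r_{\alpha,\beta}\neq0$ and $\|v^r_{\alpha,\beta}\|_2\ge\|y\|_2^2/\gamma$, then $$\frac{\|v^r_{\alpha,\beta}\|_1}{\|v^r_{\alpha,\beta}\|_2}<\frac{\gamma}{\beta}.$$
   Context: For $y\in\mathbb{R}^m$ and $\alpha,\beta>0$, the functional $J^R_{\alpha,\beta}:(\mathbb{R}^{n_1})^R\times(\mathbb{R}^{n_2})^R\to\mathbb{R}$ is $$J^R_{\alpha,\beta}(u^1,\dots,u^R,v^1,\dots,v^R)=\Big\|y-\mathcal{A}\Big(\sum_{r=1}^Ru^r(v^r)^T\Big)\Big\|_2^2+\alpha\sum_{r=1}^R\|u^r\|_2^2+\beta\sum_{r=1}^R\|v^r\|_1.$$ *)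

(* Defs.v *)
(* the real field is an arbitrary real closed field R
   (the paper's R is an instance); norms are defined explicitly. *)
From HB Require Import structures.
From mathcomp Require Import all_boot all_order all_algebra.
Set Implicit Arguments. Unset Strict Implicit. Unset Printing Implicit Defensive.
Import Order.TTheory GRing.Theory Num.Theory.
Local Open Scope ring_scope.

Definition norm2 (R : rcfType) (n : nat) (x : 'cV[R]_n) : R :=
  Num.sqrt (\sum_(i < n) (x i 0) ^+ 2).

Definition norm1 (R : rcfType) (n : nat) (x : 'cV[R]_n) : R :=
  \sum_(i < n) `|x i 0|.

Definition J (R : rcfType) (n1 n2 m Rk : nat)
  (A : {linear 'M[R]_(n1, n2) -> 'cV[R]_m}) (y : 'cV[R]_m) (alpha beta : R)
  (U : 'I_Rk -> 'cV[R]_n1) (V : 'I_Rk -> 'cV[R]_n2) : R :=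
  norm2 (y - A (\sum_(r < Rk) U r *m (V r)^T)) ^+ 2
  + alpha * \sum_(r < Rk) norm2 (U r) ^+ 2
  + beta * \sum_(r < Rk) norm1 (V r).

(* Main.v *)
Require Import Defs.
From HB Require Import structures.
From mathcomp Require Import all_boot all_order all_algebra.
From mathcomp Require Import lra.
Import Order.TTheory GRing.Theory Num.Theory.
Local Open Scope ring_scope.

Lemma norm2_ge0 (R : rcfType) n (x : 'cV[R]_n) : 0 <= norm2 x.
Proof. exact: sqrtr_ge0. Qed.

Lemma norm1_ge0 (R : rcfType) n (x : 'cV[R]_n) : 0 <= norm1 x.
Proof. by apply: sumr_ge0 => i _. Qed.

Lemma norm2_0 (R : rcfType) n : norm2 (0 : 'cV[R]_n) = 0.
Proof. by rewrite /norm2 big1 ?sqrtr0 // => i _; rewrite mxE expr0n. Qed.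

Lemma norm1_0 (R : rcfType) n : norm1 (0 : 'cV[R]_n) = 0.
Proof. by rewrite /norm1 big1 // => i _; rewrite mxE normr0. Qed.

Lemma nz_entry (R : rcfType) n (x : 'cV[R]_n) : x != 0 -> exists i, x i 0 != 0.
Proof.
move=> hx; apply/existsP; apply: contraR hx => /existsPn H.
apply/eqP/matrixP => i j; rewrite ord1 mxE; exact/eqP/negPn/H.
Qed.

Lemma norm2_gt0 (R : rcfType) n (x : 'cV[R]_n) : x != 0 -> 0 < norm2 x.
Proof.
move=> /nz_entry [i hi]; rewrite /norm2 sqrtr_gt0.
rewrite (bigD1 i) //=.
have h1 : 0 < x i 0 ^+ 2 by rewrite exprn_even_gt0.
have h2 : 0 <= \sum_(j < n | j != i) x j 0 ^+ 2 by apply: sumr_ge0 => j _; rewrite sqr_ge0.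
lra.
Qed.

Lemma norm1_gt0 (R : rcfType) n (x : 'cV[R]_n) : x != 0 -> 0 < norm1 x.
Proof.
move=> /nz_entry [i hi]; rewrite /norm1.
rewrite (bigD1 i) //=.
have h1 : 0 < `|x i 0| by rewrite normr_gt0.
have h2 : 0 <= \sum_(j < n | j != i) `|x j 0| by apply: sumr_ge0 => j _.
lra.
Qed.

Arguments norm2_gt0 {R n x}.
Arguments norm1_gt0 {R n x}.
Arguments norm2_ge0 {R n}.
Arguments norm1_ge0 {R n}.
Arguments norm2_0 {R n}.
Arguments norm1_0 {R n}.

Theorem mainTheorem4 (R : rcfType) (n1 n2 m Rk : nat)
  (A : {linear 'M[R]_(n1, n2) -> 'cV[R]_m}) (y : 'cV[R]_m)
  (alpha beta : R) (U : 'I_Rk -> 'cV[R]_n1) (V : 'I_Rk -> 'cV[R]_n2)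
  (gamma : R) (r : 'I_Rk) :
  (1 <= Rk)%N -> 0 < alpha -> 0 < beta ->
  (forall (U' : 'I_Rk -> 'cV[R]_n1) (V' : 'I_Rk -> 'cV[R]_n2),
      J A y alpha beta U V <= J A y alpha beta U' V') ->
  0 < gamma ->
  V r != 0 ->
  norm2 y ^+ 2 / gamma <= norm2 (V r) ->
  norm1 (V r) / norm2 (V r) < gamma / beta.
Proof.
move=> _ ha hb hmin hg hv hy.
have n2p := norm2_gt0 hv.
have n1p := norm1_gt0 hv.
have J0 : J A y alpha beta U V <= norm2 y ^+ 2.
  have E : J A y alpha beta (fun _ : 'I_Rk => 0 : 'cV[R]_n1) (fun _ : 'I_Rk => 0 : 'cV[R]_n2) = norm2 y ^+ 2.
  rewrite /J big1; last by move=> i _; rewrite mul0mx.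
  rewrite linear0 subr0.
  rewrite [X in beta * X]big1 ?mulr0 ?addr0; last by move=> i _; rewrite norm1_0.
  by rewrite big1 ?mulr0 ?addr0 // => i _; rewrite norm2_0 expr0n.
  by rewrite -E.
have hU : U r != 0.
  apply/negP => /eqP hU0.
  pose V' := fun i => if i == r then 0 else V i.
  have := hmin U V'; rewrite /J.
  have -> : \sum_(i < Rk) U i *m (V' i)^T = \sum_(i < Rk) U i *m (V i)^T.
    apply: eq_bigr => i _; rewrite /V'; case: eqP => [->|//].
    by rewrite hU0 !mul0mx.
  rewrite (bigD1 r _ (P:=xpredT) (F:=fun i => norm1 (V i))) //=.
  rewrite (bigD1 r _ (P:=xpredT) (F:=fun i => norm1 (V' i))) //=.
  rewrite /V' eqxx norm1_0 add0r.
  have -> : \sum_(i < Rk | i != r) norm1 (if i == r then 0 else V i) =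
            \sum_(i < Rk | i != r) norm1 (V i).
    by apply: eq_bigr => i /negbTE ->.
  rewrite lerD2l mulrDr => H.
  have : 0 < beta * norm1 (V r) by rewrite mulr_gt0.
  lra.
have hJ : beta * norm1 (V r) < J A y alpha beta U V.
  rewrite /J.
  have h1 : alpha * norm2 (U r) ^+ 2 <= alpha * \sum_(i < Rk) norm2 (U i) ^+ 2.
    rewrite ler_pM2l // (bigD1 r) //= lerDl.
    by apply: sumr_ge0 => i _; rewrite exprn_ge0 // norm2_ge0.
  have h2 : norm1 (V r) <= \sum_(i < Rk) norm1 (V i).
    rewrite (bigD1 r) //= lerDl.
    by apply: sumr_ge0 => i _; rewrite norm1_ge0.
  have h3 : 0 < alpha * norm2 (U r) ^+ 2.
    by rewrite mulr_gt0 // exprn_gt0 // norm2_gt0.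
  have h4 : 0 <= norm2 (y - A (\sum_(r0 < Rk) U r0 *m (V r0)^T)) ^+ 2.
    by rewrite exprn_ge0 // norm2_ge0.
  rewrite -(ler_pM2l hb) in h2.
  lra.
rewrite ltr_pdivrMr // mulrAC ltr_pdivlMr //.
rewrite ler_pdivrMr // in hy.
rewrite mulrC; apply: (lt_le_trans hJ); apply: (le_trans J0).
by rewrite mulrC.
Qed.
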